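(* In the Standing Setup with $R=-v(X-w)$ ($v,w\in\mathbb F$), for every $h\in\mathbb Z$: $$d_{h-1}d_hd_{h+1}=-v(e_h+w),$$ $$e_h+e_{h+1}+v_h=\frac{v}{d_hd_{h+1}},\qquad e_he_{h+1}-w_h=-\frac{vw}{d_hd_{h+1}} .$$
   Context: Standing Setup. $\mathbb F$ is a field of characteristic not $2$ or $3$; $f,g\in\mathbb F$; $A=X^3+fX+g\in\mathbb F[X]$; $R\in\mathbb F[X]$ is a polynomial of degree at most $2$; $D=A^2+4R$; $Y$ satisfies $Y^2=D(X)$, $Z=\tfrac12(Y+A)$ and $\overline Z=\tfrac12(-Y+A)$, so $Z+\overline Z=A$ and $Z\overline Z=-R$. We are given sequences $(u_h),(v_h),(w_h),(d_h),(e_h)$ of elements of $\mathbb F$ indexed by $h\in\mathbb Z$, with all $u_h\neq0$, such that for every $h\in\mathbb Z$ the following two identities hold in $\mathbb F[X]$: (i) $A+d_h(X+e_h)+d_{h+1}(X+e_{h+1})=(X+v_h)(X^2-v_hX+w_h)$; (ii) $-u_hu_{h+1}(X^2-v_hX+w_h)(X^2-v_{h+1}X+w_{h+1})=d_{h+1}^2(X+e_{h+1})^2+d_{h+1}(X+e_{h+1})A-R$. (These say that $Z_h=\bigl(Z+d_h(X+e_h)\bigr)/\bigl(u_h(X^2-v_hX+w_h)\bigr)$ are consecutive complete quotients of a continued fraction expansion with partial quotients $(X+v_h)/u_h$.) *)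

(* Defs.v *)
From HB Require Import structures.
From mathcomp Require Import all_boot all_order all_algebra.
Set Implicit Arguments. Unset Strict Implicit. Unset Printing Implicit Defensive.
Import Order.TTheory GRing.Theory Num.Theory.
Local Open Scope ring_scope.

Definition cubicA (F : fieldType) (f g : F) : {poly F} :=
  'X^3 + f%:P * 'X + g%:P.

(* Main.v *)
Require Import Defs.
From HB Require Import structures.
From mathcomp Require Import all_boot all_order all_algebra.
From mathcomp Require Import ring.
Import Order.TTheory GRing.Theory Num.Theory.
Local Open Scope ring_scope.
Ltac cf := repeat (rewrite ?(coefD, coefN, coefB, coefM, coefC, coefX, coefXn, coefMC, coefCM, coefZ) ?big_ord_recr ?big_ord0 /= ?subSS ?subn0 ?subnn /=).

Lemma eq_from (F : fieldType) (x y x' y' : F) : x' = y' -> x - y = x' - y' -> x = y.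
Proof. by move=> H E; apply/eqP; rewrite -subr_eq0 E H subrr. Qed.
Lemma eq_fromN (F : fieldType) (x y x' y' : F) : x' = y' -> x - y = y' - x' -> x = y.
Proof. by move=> H E; apply/eqP; rewrite -subr_eq0 E H subrr. Qed.

Lemma step_scalar (F : fieldType) (f g v w cu c a e0 E vs ws V W : F) :
  cu != 0 ->
  f + a + c = ws - vs^+2 ->
  g + a * e0 + c * E = vs * ws ->
  cu = c ->
  cu * (- vs - V) = c * E ->
  cu * (ws + W + vs * V) = c^+2 + c * f ->
  cu * (- vs * W - V * ws) = 2 * c^+2 * E + c * g + c * E * f + v ->
  cu * (ws * W) = c^+2 * E^+2 + c * E * g - v * w ->
  [/\ V = - vs - E, W = vs * E - a,
      v = c * a * (vs + e0 + E) & - (v * w) = c * a * (e0 * E - ws)].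
Proof.
move=> cu0 H1 H0 H4 H3 H2 Hx1 Hx0.
subst cu.
have hV : V = - vs - E.
  apply: (mulfI cu0).
  eapply eq_fromN; [exact H3|]; ring.
have hf : f = ws - vs^+2 - a - c by eapply eq_from; [exact H1|]; ring.
have hg : g = vs * ws - a * e0 - c * E by eapply eq_from; [exact H0|]; ring.
subst V f g.
have hW : W = vs * E - a.
  apply: (mulfI cu0).
  by eapply eq_from; [exact H2|]; ring.
subst W.
split => //.
  have -> : v = c * (- vs * (vs * E - a) - (- vs - E) * ws) - (2 * c^+2 * E + c * (vs * ws - a * e0 - c * E) + c * E * (ws - vs ^+ 2 - a - c)) by rewrite Hx1; ring.
  ring.
have -> : v * w = c^+2 * E^+2 + c * E * (vs * ws - a * e0 - c * E) - c * (ws * (vs * E - a)) by rewrite Hx0; ring.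
ring.
Qed.

Theorem mainTheorem7 (F : fieldType)
  (hchar2 : 2%N \notin [pchar F]) (hchar3 : 3%N \notin [pchar F])
  (f g v w : F)
  (u vs ws d e : int -> F)
  (hu : forall h : int, u h != 0)
  (hi : forall h : int,
      cubicA f g + (d h)%:P * ('X + (e h)%:P)
        + (d (h + 1))%:P * ('X + (e (h + 1))%:P)
      = ('X + (vs h)%:P) * ('X^2 - (vs h)%:P * 'X + (ws h)%:P))
  (hii : forall h : int,
      - ((u h * u (h + 1))%:P)
        * ('X^2 - (vs h)%:P * 'X + (ws h)%:P)
        * ('X^2 - (vs (h + 1))%:P * 'X + (ws (h + 1))%:P)
      = (d (h + 1) ^+ 2)%:P * ('X + (e (h + 1))%:P) ^+ 2
        + (d (h + 1))%:P * ('X + (e (h + 1))%:P) * cubicA f g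
        - (- (v%:P * ('X - w%:P))))
  : forall h : int,
      d (h - 1) * d h * d (h + 1) = - v * (e h + w)
      /\ e h + e (h + 1) + vs h = v / (d h * d (h + 1))
      /\ e h * e (h + 1) - ws h = - (v * w) / (d h * d (h + 1)).
Proof.
have step : forall k : int,
  [/\ vs (k + 1) = - vs k - e (k + 1), ws (k + 1) = vs k * e (k + 1) - d k,
      v = d (k + 1) * d k * (vs k + e k + e (k + 1)),
      - (v * w) = d (k + 1) * d k * (e k * e (k + 1) - ws k)
    & d (k + 1) != 0].
  move=> k.
  have Hi := hi k; have Hii := hii k; rewrite /cubicA !expr2 in Hi Hii.
  have cu0 : - (u k * u (k + 1)) != 0 by rewrite oppr_eq0 mulf_neq0.
  have E4 : - (u k * u (k + 1)) = d (k + 1).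
    by have := congr1 (fun p : {poly F} => p`_4) Hii; cf => H; eapply eq_from; [exact H|]; ring.
  have [] := (@step_scalar F f g v w (- (u k * u (k + 1))) (d (k + 1)) (d k) (e k) (e (k + 1)) (vs k) (ws k) (vs (k + 1)) (ws (k + 1)) cu0).
  - by have := congr1 (fun p : {poly F} => p`_1) Hi; cf => H; eapply eq_from; [exact H|]; ring.
  - by have := congr1 (fun p : {poly F} => p`_0) Hi; cf => H; eapply eq_from; [exact H|]; ring.
  - exact: E4.
  - by have := congr1 (fun p : {poly F} => p`_3) Hii; cf => H; eapply eq_from; [exact H|]; ring.
  - by have := congr1 (fun p : {poly F} => p`_2) Hii; cf => H; eapply eq_from; [exact H|]; ring.
  - by have := congr1 (fun p : {poly F} => p`_1) Hii; cf => H; eapply eq_from; [exact H|]; ring.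
  - by have := congr1 (fun p : {poly F} => p`_0) Hii; cf => H; eapply eq_from; [exact H|]; ring.
  move=> *; split => //; rewrite -E4 //.
move=> h.
have [_ _ v1 vw1 d1] := step h.
have [V0 W0 _ _ d0] := step (h - 1).
rewrite subrK in V0 W0 d0.
have dd : d h * d (h + 1) != 0 by rewrite mulf_neq0.
split; last split.
- have -> : - v * (e h + w) = - v * e h + (- (v * w)) by ring.
  rewrite vw1 v1 W0 V0; ring.
- rewrite v1; field; by rewrite d1 d0.
- have -> : - (v * w) / (d h * d (h + 1)) = (d (h+1) * d h * (e h * e (h+1) - ws h)) / (d h * d (h+1)) by rewrite -vw1.
  field; by rewrite d1 d0.
Qed.
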